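(* Let $h>0$ satisfy $L_eh^2\le1/9$, where $L_e=L+2\epsilon\tilde L$. Then for all $x,v\in\mathbb{R}^{Nd}$, $$\sum_{\ell=1}^N\sup_{0\le s\le h}|q^\ell_s(x,v)-x^\ell-sv^\ell|^2\le\frac{16}5(L_eh^2)^2\sum_{\ell=1}^N\Big(|x^\ell|^2+h^2|v^\ell|^2+\frac13L_e^{-2}\epsilon^2\mathbf W_0^2\Big),$$ where $\mathbf W_0=|\nabla_1W(0,0)|$.
   Context: Standing assumptions: $\epsilon\ge0$; $V:\mathbb{R}^d\to\mathbb{R}$, $W:\mathbb{R}^d\times\mathbb{R}^d\to\mathbb{R}$ are $C^1$, $\nabla_1W$ the gradient in the first argument, constants $L>0$, $\tilde L\ge0$ with: (a) $V(0)=0$, $V\ge0$; (b) $|\nabla V(x)-\nabla V(y)|\le L|x-y|$; (d) $W$ symmetric, $|\nabla_1W(x,y)-\nabla_1W(\tilde x,\tilde y)|\le\tilde L(|x-\tilde x|+|y-\tilde y|)$. Points of $\mathbb{R}^{Nd}$: $x=(x^1,\dots,x^N)$, $x^i\in\mathbb{R}^d$. $U(x)=\sum_i\big(V(x^i)+\frac\epsilon{2N}\sum_jW(x^i,x^j)\big)$, $\nabla_iU=\partial U/\partial x^i$. Exact flow $(q_t,p_t)(x,v)$: $\dot q^i_t=p^i_t$, $\dot p^i_t=-\nabla_iU(q_t)$, $(q_0,p_0)=(x,v)$. *)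

(* Defs.v *)
(* R : realType. Points of R^d are functions 'I_d -> R,
   points of R^{Nd} are functions 'I_N -> 'I_d -> R (particle, coordinate). *)
From HB Require Import structures.
From mathcomp Require Import all_boot all_order all_algebra.
From mathcomp Require Import all_classical all_reals all_analysis.
Set Implicit Arguments. Unset Strict Implicit. Unset Printing Implicit Defensive.
Import Order.TTheory GRing.Theory Num.Theory.
Import numFieldNormedType.Exports.
Local Open Scope classical_set_scope.
Local Open Scope ring_scope.

Section Defs.
Variable R : realType.

Definition sqnorm (d : nat) (x : 'I_d -> R) : R := \sum_(k < d) x k ^+ 2.
Definition enorm (d : nat) (x : 'I_d -> R) : R := Num.sqrt (sqnorm x).

Definition vsub (d : nat) (x y : 'I_d -> R) : 'I_d -> R := fun k => x k - y k.
Definition vzero (d : nat) : 'I_d -> R := fun _ => 0.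

Definition is_gradient (d : nat) (F : ('I_d -> R) -> R)
    (G : ('I_d -> R) -> 'I_d -> R) : Prop :=
  forall x k, is_derive (0 : R) (1 : R)
    (fun s : R => F (fun j => x j + s * (j == k)%:R)) (G x k).

Definition is_gradient1 (d : nat) (W : ('I_d -> R) -> ('I_d -> R) -> R)
    (G1 : ('I_d -> R) -> ('I_d -> R) -> 'I_d -> R) : Prop :=
  forall x y k, is_derive (0 : R) (1 : R)
    (fun s : R => W (fun j => x j + s * (j == k)%:R) y) (G1 x y k).

Definition Upot (N d : nat) (V : ('I_d -> R) -> R)
    (W : ('I_d -> R) -> ('I_d -> R) -> R) (eps : R)
    (x : 'I_N -> 'I_d -> R) : R :=
  \sum_(i < N) (V (x i) + eps / (2 * N%:R) * \sum_(j < N) W (x i) (x j)).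

Definition is_gradientN (N d : nat) (U : ('I_N -> 'I_d -> R) -> R)
    (GU : ('I_N -> 'I_d -> R) -> 'I_N -> 'I_d -> R) : Prop :=
  forall x i k, is_derive (0 : R) (1 : R)
    (fun s : R => U (fun i' j => x i' j + s * ((i' == i) && (j == k))%:R))
    (GU x i k).

Definition is_flow (N d : nat)
    (GU : ('I_N -> 'I_d -> R) -> 'I_N -> 'I_d -> R)
    (x v : 'I_N -> 'I_d -> R) (q p : R -> 'I_N -> 'I_d -> R) : Prop :=
  q 0 = x /\ p 0 = v /\
  (forall t i k, is_derive t (1 : R) (fun tau => q tau i k) (p t i k)) /\
  (forall t i k, is_derive t (1 : R) (fun tau => p tau i k) (- GU (q t) i k)).

End Defs.

(* Main.v *)
Require Import Defs.
From HB Require Import structures.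
From mathcomp Require Import all_boot all_order all_algebra.
From mathcomp Require Import all_classical all_reals all_analysis.
Import Order.TTheory GRing.Theory Num.Theory.
Import numFieldNormedType.Exports.
Local Open Scope classical_set_scope.
Local Open Scope ring_scope.
From mathcomp Require Import ring lra.
Set Implicit Arguments. Unset Strict Implicit.


Section Calc.
Variable R : realType.
Implicit Types (f g : R -> R) (t a b c : R).

Lemma dD f g t a b : is_derive t 1 f a -> is_derive t 1 g b ->
  is_derive t 1 (fun s => f s + g s) (a + b).
Proof. move=> ? ?; have -> : (fun s => f s + g s) = f + g by []. exact: is_deriveD. Qed.

Lemma dB f g t a b : is_derive t 1 f a -> is_derive t 1 g b ->
  is_derive t 1 (fun s => f s - g s) (a - b).
Proof. move=> ? ?; have -> : (fun s => f s - g s) = f - g by []. exact: is_deriveB. Qed.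

Lemma dN f t a : is_derive t 1 f a -> is_derive t 1 (fun s => - f s) (- a).
Proof. move=> ?; have -> : (fun s => - f s) = - f by []. exact: is_deriveN. Qed.

Lemma dC t (k : R) : is_derive t 1 (fun _ : R => k) 0.
Proof. exact: is_derive_cst. Qed.

Lemma dI t : is_derive t 1 (fun s : R => s) 1.
Proof. exact: is_derive_id. Qed.

Lemma dM f g t a b : is_derive t 1 f a -> is_derive t 1 g b ->
  is_derive t 1 (fun s => f s * g s) (f t * b + g t * a).
Proof. move=> ? ?; have -> : (fun s => f s * g s) = f * g by [].
apply: is_derive_eq. by []. Qed.

Lemma dK f t (k a : R) : is_derive t 1 f a -> is_derive t 1 (fun s => k * f s) (k * a).
Proof. move=> H. have := @dM (fun _ => k) f t 0 a (dC t k) H.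
by rewrite /= mulr0 addr0. Qed.

Lemma dS n (F : 'I_n -> R -> R) t (dF : 'I_n -> R) :
  (forall i, is_derive t 1 (F i) (dF i)) ->
  is_derive t 1 (fun s => \sum_(i < n) F i s) (\sum_(i < n) dF i).
Proof. move=> H; rewrite -fct_sumE; exact: is_derive_sum. Qed.

Lemma d_unique f t a b : is_derive t 1 f a -> is_derive t 1 f b -> a = b.
Proof. by move=> Ha Hb; rewrite -(@derive_val _ _ _ _ _ _ _ Ha) (@derive_val _ _ _ _ _ _ _ Hb). Qed.

End Calc.


Section Calc2.
Variable R : realType.
Implicit Types (f g : R -> R) (t a b c : R).

Lemma mono0 g (dg : R -> R) h : (forall t, is_derive t 1 g (dg t)) ->
  (forall t, 0 <= t <= h -> 0 <= dg t) -> forall s, 0 <= s <= h -> g 0 <= g s.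
Proof.
move=> Hd Hp s. move=> /andP[s0 sh].
apply: (@ger0_derive1_ndecr _ g 0 h _ _ _ 0 s) => //.

- move=> t; rewrite in_itv /= => /andP[t0 th].
  rewrite derive1E (@derive_val _ _ _ _ _ _ _ (Hd t)); apply: Hp.
  by rewrite !ltW.
- apply: derivable_within_continuous => t _; by case: (Hd t).
Qed.

Lemma taylor2 f (f1 f2 : R -> R) M h :
  (forall t, is_derive t 1 f (f1 t)) -> (forall t, is_derive t 1 f1 (f2 t)) ->
  f 0 = 0 -> f1 0 = 0 -> (forall t, 0 <= t <= h -> f2 t <= M) ->
  forall s, 0 <= s <= h -> f s <= M / 2 * (s * s).
Proof.
move=> H1 H2 f0 f10 HM.
have S1 : forall t, 0 <= t <= h -> f1 t <= M * t.
  move=> t Ht.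
  have D : forall u : R, is_derive u (1:R) (fun s => M * s - f1 s) (M * 1 - f2 u).
    move=> u; exact: (dB (dK M (dI u)) (H2 u)).
  have P : forall u : R, 0 <= u <= h -> 0 <= M * 1 - f2 u.
    by move=> u Hu; rewrite mulr1 subr_ge0 HM.
  have := @mono0 (fun s => M * s - f1 s) (fun s => M * 1 - f2 s) h D P t Ht.
  by rewrite mulr0 f10 subrr subr_ge0.
move=> s Hs.
have D : forall u : R, is_derive u (1:R) (fun s => M / 2 * (s * s) - f s) (M / 2 * (u * 1 + u * 1) - f1 u).
  move=> u; exact: (dB (dK (M / 2) (dM (dI u) (dI u))) (H1 u)).
have P : forall u : R, 0 <= u <= h -> 0 <= M / 2 * (u * 1 + u * 1) - f1 u.
  move=> u Hu; rewrite subr_ge0 (le_trans (S1 u Hu)) //; lra.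
have := @mono0 _ _ h D P s Hs.
by rewrite mulr0 mulr0 f0 subrr subr_ge0.
Qed.

End Calc2.


Section Calc3.
Variable R : realType.
Implicit Types (f g : R -> R) (t a b c : R).

Lemma dshift (F : R -> R) a l : is_derive (0:R) (1:R) (fun s => F (a + s)) l -> is_derive a (1:R) F l.
Proof.
move=> [Hd Hv].
have E : (fun h : R => h^-1 *: ((F \o shift a) (h *: 1) - F a)) =
   (fun h : R => h^-1 *: (((fun s => F (a + s)) \o shift 0) (h *: 1) - (fun s => F (a + s)) 0)).
  rewrite funeqE => h /=. congr (_ *: (F _ - F _)); [by rewrite addr0 addrC | by rewrite addr0].
split; first by rewrite /derivable E.
by rewrite /derive E.
Qed.

Lemma qd f c C : 0 <= C -> (forall s, `|s| <= 1 -> `|f s - f 0 - c * s| <= C * (s * s)) ->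
  is_derive (0:R) (1:R) f c.
Proof.
move=> C0 H.
have cv : (fun h : R => h^-1 *: ((f \o shift 0) (h *: 1) - f 0)) @ 0^' --> c.
  apply/cvgrPdist_le => e e0.
  exists (Num.min 1 (e / (C + 1))) => /=.
    by rewrite lt_min ltr01 divr_gt0 //; lra.
  move=> h; rewrite /= sub0r normrN lt_min => /andP[h1 he] hne.
  rewrite addr0 [_%:A]mulr1.
  have E : c - h^-1 *: (f h - f 0) = - (h^-1 * (f h - f 0 - c * h)).
    rewrite [_ *: _]/(h^-1 * _) mulrBr opprB mulrCA mulVf // mulr1 //.
  rewrite E normrN normrM normfV.
  have hp : 0 < `|h| by rewrite normr_gt0.
  have H1 := H h (ltW h1).
  have hh : h * h = `|h| * `|h| by rewrite -!expr2 real_normK // num_real.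
  rewrite hh in H1.
  rewrite ler_pdivrMl //.
  apply: (le_trans H1).
  have : `|h| * (C + 1) <= e by rewrite -ler_pdivlMr; [exact: ltW | lra].
  nra.
have dv : derivable f 0 1 by apply/cvg_ex; exists c.
split => //.
exact: cvg_lim cv.
Qed.
End Calc3.


Section Vec.
Variable R : realType.
Variable d : nat.
Implicit Types (u w y z : 'I_d -> R).

Lemma sqnorm_ge0 u : 0 <= sqnorm u.
Proof. by apply: sumr_ge0 => i _; exact: sqr_ge0. Qed.

Lemma enorm_ge0 u : 0 <= enorm u.
Proof. exact: sqrtr_ge0. Qed.

Lemma enorm_sq u : enorm u ^+ 2 = sqnorm u.
Proof. by rewrite /enorm sqr_sqrtr // sqnorm_ge0. Qed.

Lemma comp_le u k : `|u k| <= enorm u.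
Proof.
rewrite /enorm -sqrtr_sqr; apply: ler_wsqrtr.
rewrite /sqnorm (bigD1 k) //= lerDl; apply: sumr_ge0 => i _; exact: sqr_ge0.
Qed.

Lemma sum_delta (k : 'I_d) (c : R) : \sum_(j < d) c * (j == k)%:R = c.
Proof.
rewrite (bigD1 k) //= eqxx mulr1 big1 ?addr0 // => j /negbTE ->; by rewrite mulr0.
Qed.

Lemma enorm_shift y k a b :
  enorm (vsub (fun j => y j + a * (j == k)%:R) (fun j => y j + b * (j == k)%:R)) = `|a - b|.
Proof.
rewrite /enorm /sqnorm /vsub.
have -> : \sum_(k0 < d) (y k0 + a * (k0 == k)%:R - (y k0 + b * (k0 == k)%:R)) ^+ 2
   = \sum_(j < d) (a - b) ^+ 2 * (j == k)%:R.
  apply: eq_bigr => j _; case: (j == k); rewrite /= ?mulr1 ?mulr0 ?addr0 ?subrr ?expr0n ?mulr0 //.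
  by congr (_ ^+ 2); lra.
by rewrite sum_delta sqrtr_sqr.
Qed.

Lemma shift_fun y k t s :
  (fun j => (y j + t * (j == k)%:R) + s * (j == k)%:R) = (fun j => y j + (t + s) * (j == k)%:R).
Proof. by rewrite funeqE => j; rewrite mulrDl addrA. Qed.

Lemma shift0_fun y k : (fun j => y j + 0 * (j == k)%:R) = y.
Proof. by rewrite funeqE => j; rewrite mul0r addr0. Qed.

Lemma shift_grad (F : ('I_d -> R) -> R) G : is_gradient F G ->
  forall y k t, is_derive t (1:R) (fun s => F (fun j => y j + s * (j == k)%:R))
                        (G (fun j => y j + t * (j == k)%:R) k).
Proof.
move=> HG y k t; apply: dshift.
have := HG (fun j => y j + t * (j == k)%:R) k.
by under eq_fun do rewrite shift_fun.
Qed.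

Lemma shift_grad1 (W : ('I_d -> R) -> ('I_d -> R) -> R) G : is_gradient1 W G ->
  forall y z k t, is_derive t (1:R) (fun s => W (fun j => y j + s * (j == k)%:R) z)
                        (G (fun j => y j + t * (j == k)%:R) z k).
Proof.
move=> HG y z k t; apply: dshift.
have := HG (fun j => y j + t * (j == k)%:R) z k.
by under eq_fun do rewrite shift_fun.
Qed.

End Vec.


Section Vec2.
Variable R : realType.
Variable d : nat.
Implicit Types (u w y z : 'I_d -> R).

Lemma gradV0 (V : ('I_d -> R) -> R) G : is_gradient V G -> V (@vzero R d) = 0 ->
  (forall y, 0 <= V y) -> forall k, G (@vzero R d) k = 0.
Proof.
move=> HG V0 Vp k.
have D := shift_grad HG (@vzero R d) k.
have M : is_derive (0:R) (1:R) (fun s => V (fun j => @vzero R d j + s * (j == k)%:R)) 0.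
  apply: (@derive1_at_min _ _ (-1) 1 0).
  - lra.
  - by move=> t _; case: (D t).
  - rewrite in_itv /=; apply/andP; split; lra.
  - by move=> t _; rewrite shift0_fun V0.
have := D 0; rewrite shift0_fun => D0.
exact: d_unique D0 M.
Qed.

End Vec2.


Section Vec3.
Variable R : realType.
Variable d : nat.
Implicit Types (u w y z : 'I_d -> R).

Lemma mvt_sym (g dg : R -> R) s : (forall t, is_derive t (1:R) g (dg t)) ->
  exists2 xi, `|xi| <= `|s| & g s - g 0 = dg xi * s.
Proof.
move=> Hd.
have cont : forall a b : R, {within `[a, b], continuous g}.
  by move=> a b; apply: derivable_within_continuous => t _; case: (Hd t).
case: (lerP 0 s) => s0.
  have [xi] := @MVT_segment _ g dg 0 s s0 (fun x _ => Hd x) (cont 0 s).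
  rewrite in_itv /= => /andP[x0 xs] ->; exists xi; last by rewrite subr0.
  by rewrite !ger0_norm // (le_trans x0 xs).
have [xi] := @MVT_segment _ g dg s 0 (ltW s0) (fun x _ => Hd x) (cont s 0).
rewrite in_itv /= => /andP[x0 xs] E; exists xi.
  by rewrite !ler0_norm ?(ltW s0) // lerN2.
have : g s - g 0 = - (g 0 - g s) by rewrite opprB.
by rewrite E => ->; rewrite sub0r mulrN opprK.
Qed.

Lemma diag (W : ('I_d -> R) -> ('I_d -> R) -> R) G1 Lt :
  is_gradient1 W G1 -> (forall y z, W y z = W z y) ->
  (forall y z y' z', enorm (vsub (G1 y z) (G1 y' z')) <= Lt * (enorm (vsub y y') + enorm (vsub z z'))) ->
  0 <= Lt -> forall y k,
  is_derive (0:R) (1:R) (fun s => W (fun j => y j + s * (j == k)%:R) (fun j => y j + s * (j == k)%:R))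
     (G1 y y k + G1 y y k).
Proof.
move=> HG Wsym Lip Lt0 y k.
pose e s := fun j => y j + s * (j == k)%:R.
have e0 : e 0 = y by exact: shift0_fun.
have P2 : is_derive (0:R) (1:R) (fun s => W y (e s)) (G1 y y k).
  have := shift_grad1 HG y y k 0; rewrite shift0_fun.
  by under eq_fun do rewrite Wsym.
have P1 : is_derive (0:R) (1:R) (fun s => W (e s) (e s) - W y (e s)) (G1 y y k).
  apply: (@qd _ _ _ (2 * Lt)); first lra.
  move=> s s1.
  have [xi xs E] := mvt_sym s (shift_grad1 HG y (e s) k).
  rewrite -/(e s) -/(e 0) e0 in E.
  rewrite -/(e 0) e0 subrr subr0 E -mulrBl normrM.
  have L := Lip (e xi) (e s) (e 0) (e 0).
  rewrite [enorm (vsub (e xi) _)]enorm_shift [enorm (vsub (e s) _)]enorm_shift !subr0 e0 in L.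
  have L2 := le_trans (comp_le _ k) L.
  rewrite /vsub in L2.
  have ns : `|s| * `|s| = s * s by rewrite -normrM ger0_norm // -expr2 sqr_ge0.
  rewrite -ns mulrC.
  have : `|G1 (e xi) (e s) k - G1 y y k| <= 2 * Lt * `|s|.
    apply: (le_trans L2); nra.
  rewrite -/(e xi); have := normr_ge0 s; nra.
have := dD P1 P2.
have -> : (fun s => W (e s) (e s) - W y (e s) + W y (e s)) = (fun s => W (e s) (e s)).
  by rewrite funeqE => s; rewrite subrK.
done.
Qed.

End Vec3.


Section GU.
Variable R : realType.
Variables N d : nat.

Lemma sum_if (n : nat) (i : 'I_n) (F : 'I_n -> R) :
  \sum_(i' < n) (if i' == i then F i' else 0) = F i.
Proof. by rewrite (bigD1 i) //= eqxx big1 ?addr0 // => j /negbTE ->. Qed.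

Lemma xs_eq (x : 'I_N -> 'I_d -> R) (i i' : 'I_N) k s :
  (fun j => x i' j + s * ((i' == i) && (j == k))%:R) =
  if i' == i then (fun j => x i j + s * (j == k)%:R) else x i'.
Proof.
case: eqP => [->|_] /=; first by [].
by rewrite funeqE => j; rewrite mulr0 addr0.
Qed.

Lemma gradU_formula (eps Lt : R) V gradV W grad1W gradU :
  is_gradient V gradV -> is_gradient1 W grad1W -> (forall y z, W y z = W z y) ->
  (forall y z y' z', enorm (vsub (grad1W y z) (grad1W y' z')) <= Lt * (enorm (vsub y y') + enorm (vsub z z'))) ->
  0 <= Lt ->
  is_gradientN (Upot (N:=N) (d:=d) V W eps) gradU ->
  forall x i k, gradU x i k = gradV (x i) k + eps / N%:R * \sum_(j < N) grad1W (x i) (x j) k.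
Proof.
move=> HV HW Wsym Lip Lt0 HU x i k.
pose xs (s : R) := fun i' j => x i' j + s * ((i' == i) && (j == k))%:R.
have TV : forall i', is_derive (0:R) (1:R) (fun s => V (xs s i')) (if i' == i then gradV (x i) k else 0).
  move=> i'; rewrite /xs; under eq_fun do rewrite xs_eq.
  case: (i' == i).
    by have := shift_grad HV (x i) k 0; rewrite shift0_fun.
  exact: dC.
have TW : forall i' j, is_derive (0:R) (1:R) (fun s => W (xs s i') (xs s j))
    ((if i' == i then grad1W (x i) (x j) k else 0) + (if j == i then grad1W (x i) (x i') k else 0)).
  move=> i' j; rewrite /xs; under eq_fun do rewrite !xs_eq.
  have [ei|ni] := eqVneq i' i; have [ej|nj] := eqVneq j i; rewrite ?ei ?ej ?eqxx ?(negbTE ni) ?(negbTE nj) /=.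
  - exact: (diag HW Wsym Lip Lt0).
  - rewrite addr0; have := shift_grad1 HW (x i) (x j) k 0; by rewrite shift0_fun.
  - rewrite add0r; under eq_fun do rewrite Wsym.
    have := shift_grad1 HW (x i) (x i') k 0; by rewrite shift0_fun.
  - rewrite addr0; exact: dC.
have D := HU x i k.
have D2 : is_derive (0:R) (1:R) (fun s => Upot V W eps (xs s))
   (\sum_(i' < N) ((if i' == i then gradV (x i) k else 0) + eps / (2 * N%:R) *
      \sum_(j < N) ((if i' == i then grad1W (x i) (x j) k else 0) + (if j == i then grad1W (x i) (x i') k else 0)))).
  rewrite /Upot; apply: dS => i'.
  exact: (dD (TV i') (dK _ (@dS _ N (fun j s => W (xs s i') (xs s j)) 0 _ (TW i')))).
rewrite (d_unique D D2).
rewrite big_split /= sum_if -mulr_sumr.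
have -> : \sum_(i' < N) \sum_(j < N) ((if i' == i then grad1W (x i) (x j) k else 0) +
      (if j == i then grad1W (x i) (x i') k else 0)) =
      \sum_(j < N) grad1W (x i) (x j) k + \sum_(j < N) grad1W (x i) (x j) k.
  rewrite (eq_bigr (fun i' => (if i' == i then \sum_(j < N) grad1W (x i) (x j) k else 0) + grad1W (x i) (x i') k)).
    by rewrite big_split /= sum_if.
  move=> i' _; rewrite big_split /= sum_if; congr (_ + _).
  by case: (i' == i); last by rewrite big1.
have N0 : N%:R != 0 :> R by rewrite pnatr_eq0 -lt0n (leq_ltn_trans _ (ltn_ord i)).
by congr (_ + _); field.
Qed.

End GU.


Section Alg.
Variable R : realType.

Definition dot n (u w : 'I_n -> R) := \sum_(k < n) u k * w k.

Lemma CS n (u w : 'I_n -> R) : dot u w ^+ 2 <= sqnorm u * sqnorm w.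
Proof.
have [w0|wn0] := eqVneq (sqnorm w) 0.
  have wz : forall k, w k = 0.
    move=> k; apply/eqP; rewrite -sqrf_eq0; apply/eqP.
    move/eqP: w0; rewrite /sqnorm psumr_eq0 => [/allP /(_ k) H|i _]; last exact: sqr_ge0.
    by apply/eqP; apply: H; rewrite mem_index_enum.
  rewrite w0 mulr0 /dot big1 ?expr0n // => k _; by rewrite wz mulr0.
have wp : 0 < sqnorm w by rewrite lt_def wn0 sqnorm_ge0.
pose t := dot u w / sqnorm w.
have H : 0 <= \sum_(k < n) (u k - t * w k) ^+ 2 by apply: sumr_ge0 => k _; exact: sqr_ge0.
have E : \sum_(k < n) (u k - t * w k) ^+ 2 = sqnorm u - 2 * t * dot u w + t ^+ 2 * sqnorm w.
  rewrite (eq_bigr (fun k => (u k ^+ 2 - (2 * t) * (u k * w k)) + t ^+ 2 * w k ^+ 2)); last by move=> k _; ring.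
  by rewrite big_split sumrB /= -!mulr_sumr.
rewrite E /t in H.
have : 0 <= sqnorm u * sqnorm w - dot u w ^+ 2.
  have -> : sqnorm u * sqnorm w - dot u w ^+ 2 =
    sqnorm w * (sqnorm u - 2 * (dot u w / sqnorm w) * dot u w + (dot u w / sqnorm w) ^+ 2 * sqnorm w).
    by field.
  exact: mulr_ge0 (ltW wp) H.
lra.
Qed.

Lemma sum_sq_le n (a : 'I_n -> R) : (\sum_(j < n) a j) ^+ 2 <= n%:R * \sum_(j < n) a j ^+ 2.
Proof.
have := CS a (fun _ => 1).
rewrite /dot /sqnorm (eq_bigr (fun j => a j)); last by move=> j _; rewrite mulr1.
rewrite [X in _ * X](eq_bigr (fun _ => 1)); last by move=> j _; rewrite expr1n.
by rewrite sumr_const card_ord mulrC.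
Qed.

Lemma sq3 a b c : (a + b + c) ^+ 2 <= 3 * (a ^+ 2 + b ^+ 2 + c ^+ 2) :> R.
Proof. have := sqr_ge0 (a - b); have := sqr_ge0 (b - c); have := sqr_ge0 (a - c); nra. Qed.

Lemma enorm_le_sq d (u w : 'I_d -> R) c : 0 <= c -> enorm u <= c * enorm w -> sqnorm u <= c ^+ 2 * sqnorm w.
Proof.
move=> c0 H; rewrite -!enorm_sq.
have := enorm_ge0 u; have := enorm_ge0 w; nra.
Qed.

Lemma vsub0 d (u : 'I_d -> R) : vsub u (@vzero R d) = u.
Proof. by rewrite funeqE => k; rewrite /vsub /vzero subr0. Qed.

End Alg.


Section GB.
Variable R : realType.
Variables N d : nat.

Lemma G_bound (L Lt eps : R) (gradV : ('I_d -> R) -> 'I_d -> R)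
  (grad1W : ('I_d -> R) -> ('I_d -> R) -> 'I_d -> R) (Q : 'I_N -> 'I_d -> R) (l : 'I_N) (G : 'I_d -> R) :
  0 <= eps ->
  (forall y, sqnorm (gradV y) <= L ^+ 2 * sqnorm y) ->
  (forall y z, sqnorm (vsub (grad1W y z) (grad1W (@vzero R d) (@vzero R d))) <= 2 * Lt ^+ 2 * (sqnorm y + sqnorm z)) ->
  (forall k, G k = gradV (Q l) k + eps / N%:R * \sum_(j < N) grad1W (Q l) (Q j) k) ->
  sqnorm G <= 3 * (L ^+ 2 * sqnorm (Q l) + eps ^+ 2 * sqnorm (grad1W (@vzero R d) (@vzero R d))
     + eps ^+ 2 / N%:R * \sum_(j < N) (2 * Lt ^+ 2 * (sqnorm (Q l) + sqnorm (Q j)))).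
Proof.
move=> e0 HV HW HG.
set g0 := grad1W (@vzero R d) (@vzero R d).
pose D j k := grad1W (Q l) (Q j) k - g0 k.
have N0 : N%:R != 0 :> R by rewrite pnatr_eq0 -lt0n (leq_ltn_trans _ (ltn_ord l)).
have Gk : forall k, G k = gradV (Q l) k + eps * g0 k + eps / N%:R * \sum_(j < N) D j k.
  move=> m; rewrite HG /D sumrB sumr_const card_ord -[g0 m *+ N]mulr_natr; field; exact: N0.
have S1 : sqnorm G <= \sum_(k < d) 3 * (gradV (Q l) k ^+ 2 + (eps * g0 k) ^+ 2 + (eps / N%:R * \sum_(j < N) D j k) ^+ 2).
  by apply: ler_sum => k _; rewrite Gk; apply: sq3.
apply: (le_trans S1).
rewrite -mulr_sumr ler_wpM2l //.
rewrite !big_split /=.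
rewrite -/(sqnorm (gradV (Q l))).
have -> : \sum_(k < d) (eps * g0 k) ^+ 2 = eps ^+ 2 * sqnorm g0.
  by rewrite /sqnorm mulr_sumr; apply: eq_bigr => k _; rewrite exprMn.
apply: lerD; first apply: lerD => //.
have E1 : \sum_(k < d) (eps / N%:R * \sum_(j < N) D j k) ^+ 2 =
   (eps / N%:R) ^+ 2 * \sum_(k < d) (\sum_(j < N) D j k) ^+ 2.
  by rewrite mulr_sumr; apply: eq_bigr => k _; rewrite exprMn.
rewrite E1.
have E2 : \sum_(k < d) (\sum_(j < N) D j k) ^+ 2 <= N%:R * \sum_(j < N) sqnorm (D j).
  rewrite /sqnorm exchange_big /= mulr_sumr.
  apply: ler_sum => k _; exact: sum_sq_le.
have E3 : \sum_(j < N) sqnorm (D j) <= \sum_(j < N) (2 * Lt ^+ 2 * (sqnorm (Q l) + sqnorm (Q j))).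
  by apply: ler_sum => j _; exact: HW.
have P : 0 <= (eps / N%:R) ^+ 2 by exact: sqr_ge0.
have Np : 0 < N%:R :> R by rewrite ltr0n (leq_ltn_trans (leq0n l) (ltn_ord l)).
apply: (le_trans (ler_wpM2l P E2)).
have -> : (eps / N%:R) ^+ 2 * (N%:R * \sum_(j < N) sqnorm (D j)) = eps ^+ 2 / N%:R * \sum_(j < N) sqnorm (D j).
  by field; exact: N0.
apply: ler_wpM2l => //.
by apply: divr_ge0; [exact: sqr_ge0 | exact: ltW].
Qed.

End GB.


Section Sup.
Variable R : realType.

Lemma sup_facts (f df : R -> R) h : (forall s, is_derive s (1:R) f (df s)) -> 0 <= h ->
  (forall s, 0 <= s <= h -> f s <= sup [set f s | s in `[0, h]]) /\
  (forall B, (forall s, 0 <= s <= h -> f s <= B) -> sup [set f s | s in `[0, h]] <= B).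
Proof.
move=> Hd h0.
have cont : {within `[0, h], continuous f}.
  by apply: derivable_within_continuous => t _; case: (Hd t).
have [c cin cmax] := EVT_max h0 cont.
have ne : [set f s | s in `[0, h]] !=set0.
  exists (f 0); exists 0 => //=; by rewrite in_itv /= lexx h0.
split.
  move=> s Hs; apply: sup_upper_bound.
    split => //; exists (f c) => y [t tin <-]; apply: cmax; exact: tin.
  by exists s => //=; rewrite in_itv /=.
move=> B HB; apply: ge_sup => // y [t tin <-]; apply: HB.
by move: tin; rewrite /= in_itv /=.
Qed.

End Sup.


Section EB.
Variable R : realType.
Variables N d : nat.

Lemma e_bound (gradU : ('I_N -> 'I_d -> R) -> 'I_N -> 'I_d -> R) x v q p (h K : R) (l : 'I_N) :
  is_flow gradU x v q p -> 0 <= K ->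
  (forall r, 0 <= r <= h -> sqnorm (gradU (q r) l) <= K) ->
  forall s, 0 <= s <= h -> sqnorm (fun k => q s l k - x l k - s * v l k) <= K / 4 * (h * h) * (h * h).
Proof.
move=> [q0 [p0 [Hq Hp]]] K0 HK s Hs.
set w := fun k => q s l k - x l k - s * v l k.
have de : forall t k, is_derive t (1:R) (fun t => q t l k - x l k - t * v l k) (p t l k - v l k).
  move=> t k; apply: is_derive_eq (dB (dB (Hq t l k) (dC t (x l k))) (dM (dI t) (dC t (v l k)))) _.
  by rewrite subr0 mulr0 add0r mulr1.
have dp : forall t k, is_derive t (1:R) (fun t => p t l k - v l k) (- gradU (q t) l k).
  move=> t k; apply: is_derive_eq (dB (Hp t l k) (dC t (v l k))) _.
  by rewrite subr0.
pose f t := \sum_(k < d) w k * (q t l k - x l k - t * v l k).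
pose f1 t := \sum_(k < d) w k * (p t l k - v l k).
pose f2 t := \sum_(k < d) w k * (- gradU (q t) l k).
have Df : forall t, is_derive t (1:R) f (f1 t).
  move=> t; apply: dS => k; exact: dK (de t k).
have Df1 : forall t, is_derive t (1:R) f1 (f2 t).
  move=> t; apply: dS => k; exact: dK (dp t k).
have f0 : f 0 = 0.
  by rewrite /f big1 // => k _; rewrite q0 subrr mul0r subr0 mulr0.
have f10 : f1 0 = 0.
  by rewrite /f1 big1 // => k _; rewrite p0 subrr mulr0.
set a2 := sqnorm w.
have a20 : 0 <= a2 := sqnorm_ge0 w.
set M := Num.sqrt (a2 * K).
have Hf2 : forall t, 0 <= t <= h -> f2 t <= M.
  move=> t Ht.
  have E : f2 t = - dot w (gradU (q t) l).
    by rewrite /f2 /dot -sumrN; apply: eq_bigr => k _; rewrite mulrN.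
  rewrite E.
  have C := CS w (gradU (q t) l).
  have C2 : dot w (gradU (q t) l) ^+ 2 <= a2 * K.
    apply: (le_trans C); apply: ler_wpM2l => //; exact: HK.
  apply: (le_trans (ler_norm _)); rewrite normrN -sqrtr_sqr.
  exact: ler_wsqrtr.
have T := taylor2 Df Df1 f0 f10 Hf2 Hs.
have fs : f s = a2 by rewrite /f /a2 /sqnorm; apply: eq_bigr => k _; rewrite expr2.
rewrite fs in T.
have M0 : 0 <= M := sqrtr_ge0 _.
have MM : M * M = a2 * K by rewrite -expr2 sqr_sqrtr // mulr_ge0.
have z0 : 0 <= s * s by case/andP: Hs => s0 _; exact: mulr_ge0.
have zh : s * s <= h * h by case/andP: Hs => s0 sh; apply: ler_pM.
have A : a2 <= K / 4 * (s * s) * (s * s).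
  have [->|ap] := eqVneq a2 0.
    by apply: mulr_ge0; [apply: mulr_ge0 => //; lra| ].
  have ap' : 0 < a2 by rewrite lt_def ap a20.
  have : a2 * a2 <= a2 * (K / 4 * (s * s) * (s * s)).
    have : a2 * a2 <= (M / 2 * (s * s)) * (M / 2 * (s * s)) by apply: ler_pM.
    have -> : (M / 2 * (s * s)) * (M / 2 * (s * s)) = (M * M) / 4 * ((s * s) * (s * s)) by field.
    rewrite MM.
    by have -> : a2 * K / 4 * (s * s * (s * s)) = a2 * (K / 4 * (s * s) * (s * s)) by ring.
  by rewrite ler_pM2l.
apply: (le_trans A).
have K4 : 0 <= K / 4 by lra.
apply: ler_pM; [exact: mulr_ge0 | exact: z0 | | exact: zh].
exact: ler_wpM2l.
Qed.

End EB.


Lemma final_alg (R : realFieldType) (T Xs u B Hc : R): 0 <= T -> 0 <= Xs -> 0 <= u -> u <= B -> B <= 1/81 -> 0 <= Hc -> T <= 9/4*u*Xs + 9/4*u*T + 3/4*Hc -> T <= 16/5*B*Xs + 16/15*Hc.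
Proof.
move=> T0 X0 u0 uB B1 H0 H.
have h1 : u * T <= T / 81 by nra.
have h2 : u * Xs <= B * Xs by nra.
nra.
Qed.

Lemma sumK (R : realType) n (P : 'I_n -> R) (a b c e : R) : (n != 0)%N ->
  \sum_(l < n) (3 * (a * P l + b + c / n%:R * \sum_(j < n) (e * (P l + P j)))) =
  3 * ((a + 2 * c * e) * \sum_(l < n) P l + n%:R * b).
Proof.
move=> n0.
have N0 : n%:R != 0 :> R by rewrite pnatr_eq0.
have I : forall l, \sum_(j < n) (e * (P l + P j)) = e * (n%:R * P l + \sum_(j < n) P j).
  by move=> l; rewrite -mulr_sumr big_split /= sumr_const card_ord -[P l *+ n]mulr_natl.
rewrite -mulr_sumr !big_split /= -mulr_sumr sumr_const card_ord -[b *+ n]mulr_natl.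
rewrite (eq_bigr _ (fun l _ => congr1 (fun z => c / n%:R * z) (I l))).
rewrite -mulr_sumr.
rewrite (eq_bigr _ (fun l _ => erefl (e * (n%:R * P l + \sum_(j < n) P j)))) -mulr_sumr big_split /= -mulr_sumr sumr_const card_ord.
rewrite -[(\sum_(j < n) P j) *+ n]mulr_natl.
field; exact: N0.
Qed.

Unset Implicit Arguments.
Theorem mainTheorem12 (R : realType) (N d : nat) (eps L Lt h : R)
  (V : ('I_d -> R) -> R) (gradV : ('I_d -> R) -> 'I_d -> R)
  (W : ('I_d -> R) -> ('I_d -> R) -> R)
  (grad1W : ('I_d -> R) -> ('I_d -> R) -> 'I_d -> R)
  (gradU : ('I_N -> 'I_d -> R) -> 'I_N -> 'I_d -> R)
  (x v : 'I_N -> 'I_d -> R) (q p : R -> 'I_N -> 'I_d -> R) :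
  0 <= eps -> 0 < L -> 0 <= Lt ->
  is_gradient V gradV ->
  is_gradient1 W grad1W ->
  (* (a) *) V ((@vzero R d)) = 0 -> (forall y, 0 <= V y) ->
  (* (b) *) (forall y z, enorm (vsub (gradV y) (gradV z)) <= L * enorm (vsub y z)) ->
  (* (d) *) (forall y z, W y z = W z y) ->
  (forall y z y' z', enorm (vsub (grad1W y z) (grad1W y' z'))
                     <= Lt * (enorm (vsub y y') + enorm (vsub z z'))) ->
  is_gradientN (Upot V W eps) gradU ->
  is_flow gradU x v q p ->
  0 < h -> (L + 2 * eps * Lt) * h ^+ 2 <= 1 / 9 ->
  let Le := L + 2 * eps * Lt in
  let W0 := enorm (grad1W ((@vzero R d)) ((@vzero R d))) in
  \sum_(l < N)
     sup [set sqnorm (fun k => q s l k - x l k - s * v l k) | s in `[0, h]]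
  <= 16 / 5 * (Le * h ^+ 2) ^+ 2 *
     \sum_(l < N) (sqnorm (x l) + h ^+ 2 * sqnorm (v l)
                   + 1 / 3 * Le ^- 2 * eps ^+ 2 * W0 ^+ 2).
Proof.
move=> e0 L0 Lt0 HV HW V0 Vp LipV Wsym LipW HU Hflow h0 Hh.
cbv zeta.
set Le := L + 2 * eps * Lt.
set W0 := enorm (grad1W (@vzero R d) (@vzero R d)).
have Le0 : 0 < Le by rewrite /Le; have := mulr_ge0 e0 Lt0; lra.
have [N0|Npos] := eqVneq N 0%N.
  have Z : forall F : 'I_N -> R, \sum_(l < N) F l = 0.
    by move=> F; apply: big1 => -[m Hm]; exfalso; move: Hm; rewrite N0.
  by rewrite !Z mulr0.
have Np : 0 < N%:R :> R by rewrite ltr0n lt0n.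
set g0 := grad1W (@vzero R d) (@vzero R d).
have gV0 : gradV (@vzero R d) = @vzero R d.
  by rewrite funeqE => k; exact: (gradV0 HV V0 Vp).
have HVb : forall y, sqnorm (gradV y) <= L ^+ 2 * sqnorm y.
  move=> y; have := LipV y (@vzero R d); rewrite gV0 !vsub0; exact: enorm_le_sq (ltW L0).
have HWb : forall y z, sqnorm (vsub (grad1W y z) g0) <= 2 * Lt ^+ 2 * (sqnorm y + sqnorm z).
  move=> y z; have := LipW y z (@vzero R d) (@vzero R d); rewrite !vsub0 -/g0 => H.
  rewrite -!enorm_sq.
  have a0 := enorm_ge0 (vsub (grad1W y z) g0); have b0 := enorm_ge0 y; have c0 := enorm_ge0 z.
  set a := enorm (vsub (grad1W y z) g0) in H a0 *; set b := enorm y in H b0 *; set c := enorm z in H c0 *.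
  have H1 : a ^+ 2 <= (Lt * (b + c)) ^+ 2 by have := mulr_ge0 Lt0 (addr_ge0 b0 c0); nra.
  apply: (le_trans H1); rewrite exprMn.
  have := sqr_ge0 (b - c); have := sqr_ge0 Lt; nra.
have GF := gradU_formula HV HW Wsym LipW Lt0 HU.
pose S l := sup [set sqnorm (fun k => q s l k - x l k - s * v l k) | s in `[0, h]].
case: (Hflow) => q0 [p0 [Hq Hp]].
have de : forall l t k, is_derive t (1:R) (fun t => q t l k - x l k - t * v l k) (p t l k - v l k).
  move=> l t k; apply: is_derive_eq (dB (dB (Hq t l k) (dC t (x l k))) (dM (dI t) (dC t (v l k)))) _.
  by rewrite subr0 mulr0 add0r mulr1.
have SF : forall l, (forall s, 0 <= s <= h -> sqnorm (fun k => q s l k - x l k - s * v l k) <= S l) /\ (forall B, (forall s, 0 <= s <= h -> sqnorm (fun k => q s l k - x l k - s * v l k) <= B) -> S l <= B).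
  move=> l.
  have D : forall s, is_derive s (1:R) (fun s => sqnorm (fun k => q s l k - x l k - s * v l k))
     (\sum_(k < d) ((q s l k - x l k - s * v l k) * (p s l k - v l k) + (q s l k - x l k - s * v l k) * (p s l k - v l k))).
    move=> s.
    have -> : (fun s => sqnorm (fun k => q s l k - x l k - s * v l k)) =
       (fun s => \sum_(k < d) (q s l k - x l k - s * v l k) * (q s l k - x l k - s * v l k)).
      by rewrite funeqE => t; rewrite /sqnorm; apply: eq_bigr => k _; rewrite expr2.
    apply: dS => k; exact: dM (de l s k) (de l s k).
  exact: sup_facts D (ltW h0).
have S0 : forall l, 0 <= S l.
  move=> l; apply: le_trans (sqnorm_ge0 _) ((SF l).1 0 _); by rewrite lexx ltW.
pose P j := 3 * (sqnorm (x j) + h * h * sqnorm (v j) + S j).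
have P0 : forall j, 0 <= P j.
  move=> j; apply: mulr_ge0 => //; apply: addr_ge0; last exact: S0.
  apply: addr_ge0; first exact: sqnorm_ge0.
  by apply: mulr_ge0; [apply: mulr_ge0; apply: ltW | exact: sqnorm_ge0].
have qP : forall r j, 0 <= r <= h -> sqnorm (q r j) <= P j.
  move=> r j Hr.
  have E : forall k, q r j k = x j k + r * v j k + (q r j k - x j k - r * v j k) by move=> k; ring.
  have S1 : sqnorm (q r j) <= \sum_(k < d) 3 * (x j k ^+ 2 + (r * v j k) ^+ 2 + (q r j k - x j k - r * v j k) ^+ 2).
    apply: ler_sum => k _; rewrite {1}E; exact: sq3.
  apply: (le_trans S1); rewrite -mulr_sumr ler_wpM2l // !big_split /=.
  apply: lerD; first apply: lerD.
  - by [].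
  - rewrite /sqnorm mulr_sumr; apply: ler_sum => k _; rewrite exprMn -expr2 ler_wpM2r //; first exact: sqr_ge0.
    case/andP: Hr => r0 rh; rewrite expr2; exact: ler_pM.
  - exact: (SF j).1.
pose K l := 3 * (L ^+ 2 * P l + eps ^+ 2 * sqnorm g0 + eps ^+ 2 / N%:R * \sum_(j < N) (2 * Lt ^+ 2 * (P l + P j))).
have GK : forall r l, 0 <= r <= h -> sqnorm (gradU (q r) l) <= K l.
  move=> r l Hr.
  have := G_bound (Lt := Lt) (Q := q r) (l := l) (G := gradU (q r) l) e0 HVb HWb (GF (q r) l).
  move=> H; apply: (le_trans H); apply: ler_wpM2l => //.
  apply: lerD; first apply: lerD => //.
  - apply: ler_wpM2l; [exact: sqr_ge0 | exact: qP].
  - apply: ler_wpM2l; first by apply: divr_ge0; [exact: sqr_ge0 | exact: ltW].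
    apply: ler_sum => j _; apply: ler_wpM2l; first by apply: mulr_ge0 => //; exact: sqr_ge0.
    by apply: lerD; apply: qP.
have K0 : forall l, 0 <= K l.
  move=> l; apply: mulr_ge0 => //; apply: addr_ge0; first apply: addr_ge0.
  - by apply: mulr_ge0; [exact: sqr_ge0 | exact: P0].
  - by apply: mulr_ge0; [exact: sqr_ge0 | exact: sqnorm_ge0].
  - apply: mulr_ge0; first by apply: divr_ge0; [exact: sqr_ge0 | exact: ltW].
    apply: sumr_ge0 => j _; apply: mulr_ge0; first by apply: mulr_ge0 => //; exact: sqr_ge0.
    exact: addr_ge0.
have SB : forall l, S l <= K l / 4 * (h * h) * (h * h).
  move=> l; apply: (SF l).2; exact: e_bound Hflow (K0 l) (fun r Hr => GK r l Hr).
change (\sum_(l < N) S l <= 16 / 5 * (Le * h ^+ 2) ^+ 2 *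
  \sum_(l < N) (sqnorm (x l) + h ^+ 2 * sqnorm (v l) + 1 / 3 * Le ^- 2 * eps ^+ 2 * W0 ^+ 2)).
set T := \sum_(l < N) S l.
set Xs := \sum_(l < N) (sqnorm (x l) + h * h * sqnorm (v l)).
have T1 : T <= \sum_(l < N) (K l / 4 * (h * h) * (h * h)) by apply: ler_sum => l _; exact: SB.
have PS : \sum_(l < N) P l = 3 * (Xs + T) by rewrite /P -mulr_sumr big_split.
have DD : \sum_(l < N) \sum_(j < N) (2 * Lt ^+ 2 * (P l + P j)) = 2 * Lt ^+ 2 * (N%:R * \sum_(l < N) P l + N%:R * \sum_(l < N) P l).
  have I : forall l, \sum_(j < N) (2 * Lt ^+ 2 * (P l + P j)) = 2 * Lt ^+ 2 * (N%:R * P l + \sum_(j < N) P j).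
    by move=> l; rewrite -mulr_sumr big_split /= sumr_const card_ord -[P l *+ N]mulr_natl.
  rewrite (eq_bigr _ (fun l _ => I l)) -mulr_sumr big_split /= -mulr_sumr sumr_const card_ord.
  by rewrite -[(\sum_(j < N) P j) *+ N]mulr_natl.
have KS : \sum_(l < N) (K l / 4 * (h * h) * (h * h)) =
    h * h * (h * h) / 4 * 3 * ((L ^+ 2 + 4 * eps ^+ 2 * Lt ^+ 2) * (3 * (Xs + T)) + N%:R * (eps ^+ 2 * sqnorm g0)).
  have -> : \sum_(l < N) (K l / 4 * (h * h) * (h * h)) = h * h * (h * h) / 4 * \sum_(l < N) K l.
    by rewrite mulr_sumr; apply: eq_bigr => l _; ring.
  have E : \sum_(l < N) K l = 3 * ((L ^+ 2 + 2 * eps ^+ 2 * (2 * Lt ^+ 2)) * \sum_(l < N) P l + N%:R * (eps ^+ 2 * sqnorm g0)).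
    exact: (sumK P (L ^+ 2) (eps ^+ 2 * sqnorm g0) (eps ^+ 2) (2 * Lt ^+ 2) Npos).
  rewrite E PS; ring.
have W0E : W0 ^+ 2 = sqnorm g0 by rewrite /W0 enorm_sq.
have RS : 16 / 5 * (Le * h ^+ 2) ^+ 2 *
    \sum_(l < N) (sqnorm (x l) + h ^+ 2 * sqnorm (v l) + 1 / 3 * Le ^- 2 * eps ^+ 2 * W0 ^+ 2)
    = 16 / 5 * (Le ^+ 2 * (h * h * (h * h))) * Xs + 16 / 15 * (h * h * (h * h) * N%:R * (eps ^+ 2 * sqnorm g0)).
  rewrite big_split /= sumr_const card_ord -[_ *+ N]mulr_natl W0E.
  have -> : Xs = \sum_(l < N) (sqnorm (x l) + h ^+ 2 * sqnorm (v l)) by apply: eq_bigr => l _; rewrite expr2.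
  have Le0' : Le != 0 by rewrite gt_eqF.
  field; exact: Le0'.
rewrite RS.
apply: (@final_alg _ T Xs ((L ^+ 2 + 4 * eps ^+ 2 * Lt ^+ 2) * (h * h * (h * h))) (Le ^+ 2 * (h * h * (h * h))) (h * h * (h * h) * N%:R * (eps ^+ 2 * sqnorm g0))).
- by apply: sumr_ge0 => l _; exact: S0.
- apply: sumr_ge0 => l _; apply: addr_ge0; first exact: sqnorm_ge0.
  by apply: mulr_ge0; [apply: mulr_ge0; apply: ltW | exact: sqnorm_ge0].
- apply: mulr_ge0; first by apply: addr_ge0; [exact: sqr_ge0 | apply: mulr_ge0 => //; apply: mulr_ge0 => //; exact: sqr_ge0].
  by apply: mulr_ge0; apply: mulr_ge0; apply: ltW.
- apply: ler_wpM2r; first by apply: mulr_ge0; apply: mulr_ge0; apply: ltW.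
  rewrite /Le; have := mulr_ge0 (mulr_ge0 e0 Lt0) (ltW L0); nra.
- have -> : Le ^+ 2 * (h * h * (h * h)) = (Le * h ^+ 2) ^+ 2 by ring.
  have A0 : 0 <= Le * h ^+ 2 by apply: mulr_ge0; [exact: ltW | exact: sqr_ge0].
  move: Hh; rewrite -/Le => Hh; nra.
- apply: mulr_ge0; last by apply: mulr_ge0; [exact: sqr_ge0 | exact: sqnorm_ge0].
  by apply: mulr_ge0; [apply: mulr_ge0; apply: mulr_ge0; apply: ltW | exact: ltW].
- apply: (le_trans T1); rewrite KS le_eqVlt; apply/orP; left; apply/eqP; ring.
Qed.
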